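(* Let $p\ge1$, $m=2p$, $N\ge0$, and let $\beta(0),\dots,\beta(N)$ be $p\times m$ matrices with $\beta(k)J\beta(k)^*=I_p$. Put $C_k=2K^*\beta(k)^*\beta(k)K-j$, let $W_k$ be the solution of $W_{k+1}(\lambda)-W_k(\lambda)=-\frac{i}{\lambda}jC_kW_k(\lambda)$ with $W_0=I_m$, and $\mathcal W(\lambda)=\{\mathcal W_{ij}(\lambda)\}_{i,j=1}^2=KW_{N+1}(\bar\lambda)^*$ ($p\times p$ blocks). Let $R,Q$ be $p\times p$ matrix functions meromorphic in $\mathbb C_-$, well defined at $\lambda=-i$, with $R(\lambda)^*R(\lambda)+Q(\lambda)^*Q(\lambda)>0$ and $R(\lambda)^*R(\lambda)\le Q(\lambda)^*Q(\lambda)$. Then $\det\big(\mathcal W_{11}(-i)R(-i)+\mathcal W_{12}(-i)Q(-i)\big)\neq0$.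
   Context: $\mathbb C_-$ is the open lower half-plane; $j=\mathrm{diag}(I_p,-I_p)$, $J=\begin{bmatrix}0&I_p\\ I_p&0\end{bmatrix}$, $K=\frac1{\sqrt2}\begin{bmatrix}I_p&-I_p\\ I_p&I_p\end{bmatrix}$. *)

(* Defs.v *)
From HB Require Import structures.
From mathcomp Require Import all_boot all_order all_algebra.
From mathcomp Require Import complex.
From mathcomp Require Import all_classical all_reals all_analysis.
Set Implicit Arguments. Unset Strict Implicit. Unset Printing Implicit Defensive.
Import Order.TTheory GRing.Theory Num.Theory.
Import numFieldNormedType.Exports.
Local Open Scope ring_scope.
Local Open Scope classical_set_scope.

Section Defs.
Variable R : realType.
Local Notation C := (R[i]).

Definition adj m n (A : 'M[C]_(m, n)) : 'M[C]_(n, m) := (map_mx conjc A)^T.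

Definition psd n (A : 'M[C]_n) : Prop :=
  adj A = A /\ forall v : 'cV[C]_n, 0 <= (adj v *m A *m v) 0 0.
Definition posdef n (A : 'M[C]_n) : Prop :=
  adj A = A /\ forall v : 'cV[C]_n, v != 0 -> 0 < (adj v *m A *m v) 0 0.

Definition lower_half : set C := [set z | complex.Im z < 0].

Definition holo_at (f : C -> C) (z : C) : Prop :=
  derivable (f : C^o -> C^o) z 1.

(* F : C -> M is meromorphic in the open set U, and P (a subset of U without
   accumulation points in U) contains every point where F fails to be
   holomorphic; each point of P is at most a pole. *)
Definition meromorphic_off m n (U P : set C) (F : C -> 'M[C]_(m, n)) : Prop :=
  [/\ P `<=` U,
      (forall z, U z -> exists2 e : C, 0 < e &
          forall w, P w -> `|w - z| < e -> w = z),
      (forall z, U z -> ~ P z -> forall i j, holo_at (fun w => F w i j) z) &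
      (forall p0, P p0 -> exists k : nat, forall i j,
          cvg ((fun w : C^o => (w - p0) ^+ k * F w i j) @ (p0 : C^o)^'))].

Definition jmx p : 'M[C]_(p + p) := block_mx 1%:M 0 0 (- 1%:M).
Definition Jmx p : 'M[C]_(p + p) := block_mx 0 1%:M 1%:M 0.
Definition Kmx p : 'M[C]_(p + p) :=
  (sqrtC 2)^-1 *: block_mx 1%:M (- 1%:M) 1%:M 1%:M.

Definition Cmx p (beta : nat -> 'M[C]_(p, p + p)) (k : nat) : 'M[C]_(p + p) :=
  2%:R *: (adj (Kmx p) *m adj (beta k) *m beta k *m Kmx p) - jmx p.

Fixpoint Wmx p (beta : nat -> 'M[C]_(p, p + p)) (k : nat) (l : C)
  : 'M[C]_(p + p) :=
  match k with
  | 0 => 1%:M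
  | k'.+1 => Wmx beta k' l
       - ('i / l) *: (jmx p *m Cmx beta k' *m Wmx beta k' l)
  end.

Definition calW p (beta : nat -> 'M[C]_(p, p + p)) (N : nat) (l : C)
  : 'M[C]_(p + p) := Kmx p *m adj (Wmx beta N.+1 (conjc l)).

End Defs.

(* Main.v *)
Require Import Defs.
From HB Require Import structures.
From mathcomp Require Import all_boot all_order all_algebra.
From mathcomp Require Import complex.
From mathcomp Require Import all_classical all_reals all_analysis.
Import Order.TTheory GRing.Theory Num.Theory.
Local Open Scope ring_scope.
Local Open Scope classical_set_scope.
Section Helpers.
Variable R : realType.
Local Notation C := (R[i]).

Lemma adjM m n k (A : 'M[C]_(m, n)) (B : 'M[C]_(n, k)) :
  adj (A *m B) = adj B *m adj A.
Proof. by rewrite /adj map_mxM trmx_mul. Qed.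

Lemma adjK m n (A : 'M[C]_(m, n)) : adj (adj A) = A.
Proof. by apply/matrixP => i j; rewrite !mxE conjcK. Qed.

Lemma adjD m n (A B : 'M[C]_(m, n)) : adj (A + B) = adj A + adj B.
Proof. by apply/matrixP => i j; rewrite !mxE rmorphD. Qed.

Lemma adjN m n (A : 'M[C]_(m, n)) : adj (- A) = - adj A.
Proof. by apply/matrixP => i j; rewrite !mxE rmorphN. Qed.

Lemma adjB m n (A B : 'M[C]_(m, n)) : adj (A - B) = adj A - adj B.
Proof. by rewrite adjD adjN. Qed.

Lemma adjZ m n (c : C) (A : 'M[C]_(m, n)) : adj (c *: A) = c^*%C *: adj A.
Proof. by apply/matrixP => i j; rewrite !mxE rmorphM. Qed.

Lemma adj0 m n : adj (0 : 'M[C]_(m, n)) = 0.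
Proof. by apply/matrixP => i j; rewrite !mxE rmorph0. Qed.

Lemma adj1 n : adj (1%:M : 'M[C]_n) = 1%:M.
Proof. by apply/matrixP => i j; rewrite !mxE rmorphMn rmorph1 eq_sym. Qed.

Lemma adj_block m1 m2 n1 n2 (A : 'M[C]_(m1, n1)) (B : 'M[C]_(m1, n2))
  (D : 'M[C]_(m2, n1)) (E : 'M[C]_(m2, n2)) :
  adj (block_mx A B D E) = block_mx (adj A) (adj D) (adj B) (adj E).
Proof. by rewrite /adj map_block_mx tr_block_mx. Qed.

Lemma adj_col m1 m2 n (A : 'M[C]_(m1, n)) (B : 'M[C]_(m2, n)) :
  adj (col_mx A B) = row_mx (adj A) (adj B).
Proof. by rewrite /adj map_col_mx tr_col_mx. Qed.

Lemma adj_row m n1 n2 (A : 'M[C]_(m, n1)) (B : 'M[C]_(m, n2)) :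
  adj (row_mx A B) = col_mx (adj A) (adj B).
Proof. by rewrite /adj map_row_mx tr_row_mx. Qed.

Lemma form_sum n (v : 'cV[C]_n) :
  (adj v *m v) 0 0 = \sum_i `|v i 0| ^+ 2.
Proof.
rewrite !mxE; apply: eq_bigr => i _; rewrite !mxE normCKC //.
Qed.

Lemma form_ge0 n (v : 'cV[C]_n) : 0 <= (adj v *m v) 0 0.
Proof. by rewrite form_sum sumr_ge0 // => i _; rewrite exprn_ge0. Qed.

Lemma form_eq0 n (v : 'cV[C]_n) : (adj v *m v) 0 0 = 0 -> v = 0.
Proof.
rewrite form_sum => /eqP; rewrite psumr_eq0 => [/allP H|i _]; last by rewrite exprn_ge0.
apply/matrixP => i j; rewrite (ord1 j) mxE.
have := H i (mem_index_enum i); rewrite /= sqrf_eq0 normr_eq0 => /eqP //.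
Qed.

End Helpers.
Section Consts.
Variable R : realType.
Local Notation C := (R[i]).
Variable p : nat.

Lemma adj_j : adj (jmx R p) = jmx R p.
Proof. by rewrite /jmx adj_block adjN adj1 !adj0. Qed.

Lemma jj : jmx R p *m jmx R p = 1%:M.
Proof.
rewrite /jmx mulmx_block !(mul1mx, mulmx1, mul0mx, mulmx0, addr0, add0r, mulNmx, mulmxN, opprK).
by rewrite -?scalar_mx_block.
Qed.

Definition s2 : C := (sqrtC 2)^-1.

Lemma s2J : (s2^*)%C = s2.
Proof.
rewrite /s2 conjc_inv; congr (_^-1).
by apply: (@conj_Creal C); apply: sqrtC_real; rewrite ler0n.
Qed.

Lemma s2sq : s2 * s2 * 2 = 1.
Proof.
by rewrite /s2 -invfM -expr2 sqrtCK mulVf // pnatr_eq0.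
Qed.

Lemma s2_neq0 : s2 != 0.
Proof. by rewrite /s2 invr_eq0 sqrtC_eq0 pnatr_eq0. Qed.

Lemma KjK : Kmx R p *m jmx R p *m adj (Kmx R p) = Jmx R p.
Proof.
rewrite /Kmx /jmx adjZ s2J -/s2 adj_block adjN !adj1.
rewrite -!scalemxAl -scalemxAr scalerA.
rewrite !mulmx_block !(mul1mx, mulmx1, mul0mx, mulmx0, addr0, add0r, mulNmx, mulmxN, opprK).
rewrite /Jmx scale_block_mx !subrr !scaler0.
have -> : (1%:M : 'M[C]_p) + 1%:M = 2%:R *: 1%:M by rewrite scaler_nat mulr2n.
by rewrite scalerA s2sq scale1r.
Qed.

End Consts.
Lemma mxsubE (R : realType) m n (A B : 'M[R[i]]_(m, n)) i k : (A - B) i k = A i k - B i k.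
Proof. by rewrite !mxE. Qed.
Lemma mxscaleE (R : realType) m n (c : R[i]) (A : 'M[R[i]]_(m, n)) i k : (c *: A) i k = c * A i k.
Proof. by rewrite !mxE. Qed.

Section Step.
Variable R : realType.
Local Notation C := (R[i]).
Variable p : nat.
Local Notation j := (jmx R p).

Definition Inv (x : 'cV[C]_(p + p)) :=
  x != 0 /\ (adj x *m j *m x) 0 0 <= 0.

Variable g : 'M[C]_(p, p + p).
Hypothesis Hg : g *m j *m adj g = 1%:M.

Lemma step x : Inv x -> exists u : 'cV[C]_(p + p),
  [/\ u != 0, g *m j *m u = 0, Inv (2%:R *: u) &
   (1%:M - (2%:R *: (adj g *m g) - j) *m j) *m x = 2%:R *: u].
Proof.
move=> [xn0 xle].
have [w Ew] : exists w, g *m j *m x = w by eexists.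
have [u Eu] : exists u, x - adj g *m w = u by eexists.
have e1 : g *m j *m u = 0.
  by rewrite -Eu mulmxBr !mulmxA Hg mul1mx Ew subrr.
have e2 : adj x *m j *m adj g = adj w by rewrite -Ew !adjM adj_j mulmxA.
have e3 : adj u *m j *m u = adj x *m j *m x - adj w *m w.
  rewrite -Eu adjB adjM adjK !(mulmxBl, mulmxBr) !mulmxA e2.
  have -> : adj w *m g *m j *m x = adj w *m w by rewrite -Ew !mulmxA.
  have -> : adj w *m g *m j *m adj g *m w = adj w *m w.
    by rewrite -!mulmxA (mulmxA j) (mulmxA g) (mulmxA g j) Hg mul1mx.
  by rewrite subrr subr0.
have ule : (adj u *m j *m u) 0 0 <= 0.
  rewrite e3 mxsubE subr_le0; apply: le_trans xle _; exact: form_ge0.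
have un0 : u != 0.
  apply/eqP => u0; move: e3; rewrite u0 adj0 !mul0mx => /(congr1 (fun M : 'M[C]_1 => M 0 0)).
  rewrite mxsubE mxE => /eqP; rewrite eq_sym subr_eq0 => /eqP ew.
  have w0 : w = 0.
    apply: form_eq0; apply/eqP; rewrite eq_le form_ge0 andbT -ew //.
  by move: u0 xn0; rewrite -Eu w0 mulmx0 subr0 => ->; rewrite eqxx.
exists u; split => //.
- split; first by rewrite scaler_eq0 negb_or un0 pnatr_eq0.
  rewrite adjZ conjc_nat -!scalemxAl -scalemxAr !mxscaleE.
  by rewrite mulr_ge0_le0 // ?ler0n // mulr_ge0_le0 // ler0n.
- rewrite !mulmxBl mul1mx jj mul1mx -!scalemxAl -(mulmxA (adj g)) -(mulmxA (adj g)) Ew.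
  by rewrite -Eu !scaler_nat mulrnBl opprB addrA -mulr2n.
Qed.

End Step.
Arguments Inv {R p}. Arguments step {R p g} Hg {x}.
Section LemB.
Variable R : realType.
Local Notation C := (R[i]).
Variable p : nat.

Lemma kernel_triv (b : 'M[C]_(p, p + p)) (a : 'cV[C]_p) :
  b *m Jmx R p *m adj b = 1%:M -> lsubmx b *m a = 0 -> a = 0.
Proof.
move=> Hb Ha; apply/eqP/negPn/negP => an0.
have d0 : \det (lsubmx b) == 0.
  apply/negPn/negP => dn0.
  have U : lsubmx b \in unitmx by rewrite unitmxE unitfE.
  by move: an0; rewrite -(mulKmx U a) Ha mulmx0 eqxx.
have [v vn0 vb] := det0P d0.
move: Hb; rewrite -[b]hsubmxK /Jmx adj_row mul_row_block mul_row_col.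
rewrite !(mulmx0, mulmx1, add0r, addr0) => /(congr1 (fun M => v *m M *m adj v)).
rewrite mulmx1 !(mulmxDr, mulmxDl) !mulmxA vb !mul0mx addr0.
rewrite -(mulmxA (v *m rsubmx b)) -adjM vb adj0 mulmx0 ?mul0mx => /esym E.
have : adj v = 0 by apply: form_eq0; rewrite adjK E mxE.
by move/(congr1 (@adj _ _ _)); rewrite adjK adj0 => v0; move: vn0; rewrite v0 eqxx.
Qed.

Lemma lemB (b : 'M[C]_(p, p + p)) (u : 'cV[C]_(p + p)) :
  b *m Jmx R p *m adj b = 1%:M ->
  b *m Kmx R p *m jmx R p *m u = 0 -> usubmx (Kmx R p *m u) = 0 -> u = 0.
Proof.
move=> Hb Hu Hk.
have ac : usubmx u = dsubmx u.
  move: Hk; rewrite -[u]vsubmxK /Kmx -scalemxAl mul_block_col scale_col_mx col_mxKu.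
  move/eqP; rewrite scaler_eq0 (negbTE (s2_neq0 R)) /= mul1mx mulNmx mul1mx subr_eq0.
  by move=> /eqP; rewrite !col_mxKu col_mxKd.
have ua : u = col_mx (usubmx u) (usubmx u) by rewrite {2}ac vsubmxK.
set a := usubmx u in ua.
suff a0 : a = 0 by rewrite ua a0 col_mx0.
apply: (kernel_triv _ _ Hb).
move: Hu; rewrite ua /Kmx /jmx -!mulmxA mul_block_col -scalemxAl -scalemxAr.
rewrite mul_block_col !(mul1mx, mul0mx, add0r, addr0, mulNmx, opprK) subrr.
rewrite -{1}[b]hsubmxK mul_row_col mulmx0 addr0 mulmxDr.
move/eqP; rewrite scaler_eq0 (negbTE (s2_neq0 R)) /= -mulr2n -scaler_nat scaler_eq0.
by rewrite pnatr_eq0 /= => /eqP.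
Qed.
End LemB.
Section Iter.
Variable R : realType.
Local Notation C := (R[i]).
Variable p N : nat.
Variable beta : nat -> 'M[C]_(p, p + p).
Hypothesis hbeta : forall k, (k <= N)%N -> beta k *m Jmx R p *m adj (beta k) = 1%:M.
Local Notation j := (jmx R p).
Local Notation K := (Kmx R p).

Lemma Wi k : Wmx beta k.+1 'i = (1%:M - j *m Cmx beta k) *m Wmx beta k 'i.
Proof. by rewrite /= divff ?neq0Ci // scale1r mulmxBl mul1mx. Qed.

Lemma Cg k : Cmx beta k = 2%:R *: (adj (beta k *m K) *m (beta k *m K)) - j.
Proof. by rewrite /Cmx adjM !mulmxA. Qed.

Lemma adjU k : adj (1%:M - j *m Cmx beta k) = 1%:M - Cmx beta k *m j.
Proof.
rewrite adjB adj1 adjM adj_j; congr (_ - _ *m _).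
by rewrite Cg adjB adjZ conjc_nat adjM adjK adj_j.
Qed.

Lemma Hg k : (k <= N)%N -> (beta k *m K) *m j *m adj (beta k *m K) = 1%:M.
Proof.
move=> kN; rewrite adjM !mulmxA.
have -> : beta k *m K *m j *m adj K *m adj (beta k) =
  beta k *m (K *m j *m adj K) *m adj (beta k) by rewrite !mulmxA.
by rewrite KjK hbeta.
Qed.

Lemma iterW n x : (0 < n <= N.+1)%N -> Inv x -> exists y, Inv y /\
  adj (Wmx beta n 'i) *m x = (1%:M - Cmx beta 0 *m j) *m y.
Proof.
elim: n x => [//|n IH] x /andP [_ nN] Ix.
rewrite Wi adjM adjU.
case: n IH nN => [|n] IH nN.
  by exists x; split => //; rewrite /= adj1 mul1mx.
have nN' : (n.+1 <= N)%N by rewrite -ltnS.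
have nN2 : (0 < n.+1 <= N.+1)%N by apply/andP; split => //; apply: ltnW.
have [u [_ _ Iu E]] := step (Hg n.+1 nN') Ix.
have [y [Iy Ey]] := IH _ nN2 Iu.
by exists y; split => //; rewrite (Cg n.+1) -mulmxA E Ey.
Qed.

End Iter.
Lemma cji (R : realType) : conjc (- 'i : R[i]) = 'i.
Proof.
rewrite rmorphN.
have h := conjCi (R[i]).
by rewrite -[RHS]opprK -h.
Qed.

Lemma mxoppE (R : realType) m n (A : 'M[R[i]]_(m, n)) i k : (- A) i k = - A i k.
Proof. by rewrite !mxE. Qed.

Theorem proposition5p5 (R : realType) (p : nat) (hp : (0 < p)%N) (N : nat)
  (beta : nat -> 'M[R[i]]_(p, p + p))
  (hbeta : forall k, (k <= N)%N -> beta k *m Jmx R p *m adj (beta k) = 1%:M)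
  (Rf Qf : R[i] -> 'M[R[i]]_p) (P : set R[i])
  (hR : meromorphic_off (@lower_half R) P Rf)
  (hQ : meromorphic_off (@lower_half R) P Qf)
  (hreg : ~ P (- 'i))
  (hpos : forall l, @lower_half R l -> ~ P l ->
            posdef (adj (Rf l) *m Rf l + adj (Qf l) *m Qf l))
  (hle : forall l, @lower_half R l -> ~ P l ->
            psd (adj (Qf l) *m Qf l - adj (Rf l) *m Rf l)) :
  let W := calW beta N (- 'i) in
  \det (ulsubmx W *m Rf (- 'i) + ursubmx W *m Qf (- 'i)) != 0.
Proof.
cbv zeta; set W := calW beta N (- 'i).
have lh : @lower_half R (- 'i).
  by rewrite /lower_half /= ltrN10.
have [_ Hpos] := hpos _ lh hreg.
have [_ Hle] := hle _ lh hreg.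
set X := col_mx (Rf (- 'i)) (Qf (- 'i)).
have EM : ulsubmx W *m Rf (- 'i) + ursubmx W *m Qf (- 'i) = usubmx (W *m X).
  by rewrite -mul_usub_mx -mul_row_col hsubmxK.
rewrite EM -det_tr; apply/negP => /det0P [v vn0 vM].
set c := v^T.
have cn0 : c != 0 by apply: contraNneq vn0 => /(congr1 trmx); rewrite trmxK trmx0 => ->.
have Mc : usubmx (W *m X *m c) = 0.
  by rewrite -mul_usub_mx -[usubmx _ *m c]trmxK trmx_mul trmxK vM trmx0.
set x := X *m c.
have XX : adj X *m X = adj (Rf (- 'i)) *m Rf (- 'i) + adj (Qf (- 'i)) *m Qf (- 'i).
  by rewrite /X adj_col mul_row_col.
have XjX : adj X *m jmx R p *m X =
   - (adj (Qf (- 'i)) *m Qf (- 'i) - adj (Rf (- 'i)) *m Rf (- 'i)).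
  rewrite /X adj_col /jmx mul_row_block mul_row_col.
  by rewrite !(mulmx0, mulmx1, addr0, add0r, mulmxN, mulNmx) opprB addrC.
have Ix : Inv x.
  split.
    apply/eqP => x0.
    have := Hpos c cn0; rewrite -XX -!mulmxA -/x x0 !mulmx0.
    by rewrite mxE ltxx.
  rewrite /x adjM !mulmxA.
  have -> : adj c *m adj X *m jmx R p *m X = adj c *m (adj X *m jmx R p *m X)
    by rewrite !mulmxA.
  rewrite XjX.
  by rewrite mulmxN mulNmx mxoppE oppr_le0 Hle.
have nN : (0 < N.+1 <= N.+1)%N by rewrite leqnn.
have [y [Iy Ey]] := @iterW R p N beta hbeta _ _ nN Ix.
have [u [_ gu Iu E]] := step (@Hg R p N beta hbeta 0 (leq0n N)) Iy.
rewrite Cg E in Ey.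
move: Mc; rewrite /W /calW cji -!mulmxA -/x Ey => Mc.
have := @lemB R p (beta 0) (2%:R *: u) (hbeta 0 (leq0n N)) _ Mc.
rewrite -scalemxAr gu scaler0 => /(_ erefl) u0.
by case: Iu => /eqP; rewrite u0.
Qed.
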